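(* Let $w$ be the one-sided fixed point starting with $a$ of the Fibonacci substitution, and let $n\ge1$. There exist strictly increasing sequences $(j_k)_{k\ge0}$, $(l_k)_{k\ge0}$, $(m_k)_{k\ge0}$ of even nonnegative integers such that \[C_a(X)=C_{a,R_n}(X)\sum_{k=0}^\infty X^{j_k}+C_{a,S_n}(X)\sum_{k=0}^\infty X^{l_k}+C_{a,T_n}(X)\sum_{k=0}^\infty X^{m_k}\] as formal power series (hence also for all real $X\in(-1,1)$).
   Context: The Fibonacci substitution is $\sigma(a)=ab$, $\sigma(b)=a$, extended to words by concatenation; $w=w_0w_1\ldots=\lim_{m\to\infty}\sigma^m(a)$ is its fixed point starting with $a$, and $C_a(X)=\sum_{n\ge0}1_a(w_n)X^n$. Let $A_n=\sigma^n(a)$, $B_n=\sigma^n(b)$, and $R_n=A_{3n}B_{3n}$, $S_n=A_{3n}A_{3n}$, $T_n=B_{3n}A_{3n}$ (concatenations). With Fibonacci numbers $f_1=f_2=1$, $f_{i+2}=f_{i+1}+f_i$, one has $|A_n|=f_{n+2}$, $|R_n|=|T_n|=f_{3n+3}$, $|S_n|=2f_{3n+2}$, all even. For a finite word $u=u_0\cdots u_L$, $C_{a,u}(X)=\sum_{i=0}^{L}1_a(u_i)X^i$. *)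

(* Defs.v *)
From mathcomp Require Import all_boot.
Set Implicit Arguments. Unset Strict Implicit. Unset Printing Implicit Defensive.

Inductive letter := La | Lb.

Definition ind_a (x : letter) : nat := if x is La then 1 else 0.

Definition sigma_letter (x : letter) : seq letter :=
  if x is La then [:: La; Lb] else [:: La].
Definition sigma (u : seq letter) : seq letter := flatten (map sigma_letter u).

Definition A (n : nat) : seq letter := iter n sigma [:: La].
Definition B (n : nat) : seq letter := iter n sigma [:: Lb].

(* The fixed point w = lim_m sigma^m(a): since sigma^m(a) is a prefix of
   sigma^(m+1)(a) and |sigma^(i+1)(a)| = f_(i+3) > i, the i-th letter of w is
   the i-th letter of sigma^(i+1)(a). *)
Definition w (i : nat) : letter := nth La (A i.+1) i.

Definition Rw (n : nat) : seq letter := A (3 * n) ++ B (3 * n).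
Definition Sw (n : nat) : seq letter := A (3 * n) ++ A (3 * n).
Definition Tw (n : nat) : seq letter := B (3 * n) ++ A (3 * n).

Definition series := nat -> nat.

Definition C_a : series := fun N => ind_a (w N).

Definition C_au (u : seq letter) : series :=
  fun N => if N < size u then ind_a (nth La u N) else 0.

(* sum_{k >= 0} X^{j_k} for a strictly increasing sequence j (so j k >= k):
   the coefficient of X^N is the number of k with j_k = N, and any such k
   satisfies k <= N. *)
Definition pow_series (j : nat -> nat) : series :=
  fun N => \sum_(k < N.+1) (j k == N).

Definition ps_mul (f g : series) : series :=
  fun N => \sum_(i < N.+1) f i * g (N - i).
Definition ps_add (f g : series) : series := fun N => f N + g N.

(* Main.v *)
Require Import Defs.
From mathcomp Require Import all_boot.
From mathcomp Require Import zify.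
Set Implicit Arguments. Unset Strict Implicit. Unset Printing Implicit Defensive.

Lemma sigma_cat u v : sigma (u ++ v) = sigma u ++ sigma v.
Proof. by rewrite /sigma map_cat flatten_cat. Qed.

Lemma iter_sigma_cat m u v : iter m sigma (u ++ v) = iter m sigma u ++ iter m sigma v.
Proof. by elim: m => //= m ->; rewrite sigma_cat. Qed.

Lemma iter_sigma_nil m : iter m sigma [::] = [::].
Proof. by elim: m => //= m ->. Qed.

Lemma A_S m : A m.+1 = A m ++ B m.
Proof. by rewrite /A /B iterSr -iter_sigma_cat. Qed.

Lemma B_S m : B m.+1 = A m.
Proof. by rewrite /A /B iterSr. Qed.

Lemma size_AB_pos m : 0 < size (A m) /\ 0 < size (B m).
Proof.
elim: m => [|m [ha hb]]; first by [].
by rewrite A_S B_S size_cat addn_gt0 ha.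
Qed.

Lemma size_A_gt m : m < size (A m).
Proof.
elim: m => [|m IH] //. rewrite A_S size_cat. have [_ hb] := size_AB_pos m. lia.
Qed.

Lemma size_A_mono m M : m <= M -> size (A m) <= size (A M).
Proof.
elim: M => [|M IH]; first by rewrite leqn0 => /eqP->.
rewrite leq_eqVlt => /orP [/eqP->//|hm].
rewrite A_S size_cat; apply: leq_trans (IH hm) (leq_addr _ _).
Qed.

Lemma A_prefix m M i : m <= M -> i < size (A m) -> nth La (A M) i = nth La (A m) i.
Proof.
move=> hM hi; elim: M hM => [|M IH]; first by rewrite leqn0 => /eqP->.
rewrite leq_eqVlt => /orP [/eqP->//|hm].
rewrite ltnS in hm; rewrite A_S nth_cat (leq_trans hi (size_A_mono hm)); exact: IH.
Qed.

Lemma wE m i : i < size (A m) -> w i = nth La (A m) i.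
Proof.
move=> hi; rewrite /w; case: (leqP m i.+1) => h.
  by rewrite (A_prefix h hi).
by rewrite (A_prefix (ltnW h) (ltnW (size_A_gt i.+1))).
Qed.

Lemma mkseq_w m : mkseq w m = take m (A m).
Proof.
apply: (@eq_from_nth _ La).
  by rewrite size_mkseq size_take (size_A_gt m).
move=> i; rewrite size_mkseq => hi.
rewrite nth_mkseq // nth_take //; apply: wE; exact: ltn_trans hi (size_A_gt m).
Qed.

Lemma prefix_w L m i : i < size (iter L sigma (mkseq w m)) ->
  nth La (iter L sigma (mkseq w m)) i = w i.
Proof.
move=> hi; have hA : iter L sigma (A m) = A (L + m) by rewrite /A iterD.
have e : A (L + m) = iter L sigma (mkseq w m) ++ iter L sigma (drop m (A m)).
  by rewrite -hA mkseq_w -iter_sigma_cat cat_take_drop.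
rewrite (wE (m := L + m)); last by rewrite e size_cat ltn_addr.
by rewrite e nth_cat hi.
Qed.

Lemma sigma_head u : nth La (sigma u) 0 = La.
Proof. by case: u => [|[] u]. Qed.

Lemma sigma_nobb u i : nth La (sigma u) i.+1 = Lb -> nth La (sigma u) i = La.
Proof.
elim: u i => [|x u IH] i //; rewrite /sigma /= -/(sigma u).
case: x => /=.
  by case: i => [|[|i]] /=; [done | rewrite sigma_head | exact: IH].
by case: i => [|i] /=; [rewrite sigma_head | exact: IH].
Qed.

Lemma w_nobb i : w i.+1 = Lb -> w i = La.
Proof.
have h1 : i.+1 < size (A i.+2) by apply: ltn_trans (size_A_gt _).
rewrite (wE h1) (wE (ltnW h1)) => h; exact: (@sigma_nobb (A i.+1) i h).
Qed.

Lemma parity q : odd (size (A (3*q))) /\ odd (size (B (3*q))) /\ ~~ odd (size (A (3*q).+1)).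
Proof.
elim: q => [|q [ha [hb _]]]; first by [].
have -> : 3 * q.+1 = (3*q).+3 by lia.
rewrite ?A_S ?B_S ?A_S ?B_S ?A_S ?B_S ?A_S ?B_S.
by rewrite !size_cat !oddD ha hb.
Qed.

Definition pp n k := size (iter (3*n) sigma (mkseq w (2*k))).
Definition blk n k := iter (3*n) sigma [:: w (2*k); w (2*k).+1].
Definition tt k : nat :=
  match w (2*k), w (2*k).+1 with La, Lb => 0 | La, La => 1 | Lb, _ => 2 end.
Definition word n c := match c with 0 => Rw n | 1 => Sw n | _ => Tw n end.

Lemma tt_lt3 k : tt k < 3.
Proof. by rewrite /tt; case: (w _); case: (w _). Qed.

Lemma mkseq_w2 k : mkseq w (2*k.+1) = mkseq w (2*k) ++ [:: w (2*k); w (2*k).+1].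
Proof.
have -> : 2 * k.+1 = (2*k).+2 by lia.
by rewrite !mkseqS -!cats1 -catA.
Qed.

Lemma pp_S n k : pp n k.+1 = pp n k + size (blk n k).
Proof. by rewrite /pp /blk mkseq_w2 iter_sigma_cat size_cat. Qed.

Lemma pp0 n : pp n 0 = 0.
Proof. by rewrite /pp muln0 /= iter_sigma_nil. Qed.

Lemma keyw n k d : d < size (blk n k) -> w (pp n k + d) = nth La (blk n k) d.
Proof.
move=> hd.
rewrite -(@prefix_w (3*n) (2*k.+1) (pp n k + d)); last first.
  by rewrite mkseq_w2 iter_sigma_cat size_cat ltn_add2l.
by rewrite mkseq_w2 iter_sigma_cat nth_cat /pp ltnNge leq_addr /= addKn.
Qed.

Lemma blk_word n k : blk n k = word n (tt k).
Proof.
rewrite /blk /tt /word -[[:: w (2*k); _]]/([:: w (2*k)] ++ [:: w (2*k).+1]) iter_sigma_cat.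
case E1: (w (2*k)); case E2: (w (2*k).+1); try by [].
by move/w_nobb: E2; rewrite E1.
Qed.

Lemma size_blk_even n k : ~~ odd (size (blk n k)).
Proof.
have [ha [hb _]] := parity n.
rewrite blk_word; case: (tt k) => [|[|c]] /=; rewrite /Rw /Sw /Tw size_cat oddD ?ha ?hb //.
Qed.

Lemma size_blk_pos n k : 0 < size (blk n k).
Proof.
have [ha hb] := size_AB_pos (3*n).
rewrite blk_word; case: (tt k) => [|[|c]] /=; rewrite /Rw /Sw /Tw size_cat; lia.
Qed.

Lemma pp_inc n k : pp n k < pp n k.+1.
Proof. have := size_blk_pos n k; rewrite pp_S; lia. Qed.

Lemma pp_even n k : ~~ odd (pp n k).
Proof.
elim: k => [|k IH]; first by rewrite pp0.
by rewrite pp_S oddD (negbTE IH) (negbTE (size_blk_even n k)).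
Qed.

Lemma inc_lt (f : nat -> nat) : (forall k, f k < f k.+1) -> forall a b, a < b -> f a < f b.
Proof.
move=> hf a; elim=> [|b IH] //; rewrite ltnS leq_eqVlt => /orP [/eqP->|/IH h] //.
exact: ltn_trans h (hf b).
Qed.

Lemma inc_ge (f : nat -> nat) : (forall k, f k < f k.+1) -> forall k, k <= f k.
Proof. move=> hf; elim=> // k IH; exact: leq_ltn_trans IH (hf k). Qed.

Lemma inc_inj (f : nat -> nat) : (forall k, f k < f k.+1) -> injective f.
Proof.
move=> hf a b e; case: (ltngtP a b) => // h; have := inc_lt hf h; by rewrite e ltnn.
Qed.

Lemma bracket (f : nat -> nat) : f 0 = 0 -> (forall k, f k < f k.+1) ->
  forall N, exists k, f k <= N < f k.+1.
Proof.
move=> h0 hf N.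
suff: forall K, N < f K -> exists k, f k <= N < f k.+1.
  by apply; exact: (inc_ge hf N.+1).
elim=> [|K IH]; first by rewrite h0.
move=> hN; case: (ltnP N (f K)) => h; first exact: IH.
by exists K; rewrite h hN.
Qed.

Lemma bracket_uniq (f : nat -> nat) : (forall k, f k < f k.+1) ->
  forall N k k', f k <= N < f k.+1 -> f k' <= N < f k'.+1 -> k = k'.
Proof.
move=> hf N k k' /andP[a b] /andP[c d]; case: (ltngtP k k') => // h.
  have : f k.+1 <= f k'.
    by rewrite leq_eqVlt in h; case/orP: h => [/eqP->//|h]; apply: ltnW; exact: inc_lt.
  lia.
have : f k'.+1 <= f k.
  by rewrite leq_eqVlt in h; case/orP: h => [/eqP->//|h]; apply: ltnW; exact: inc_lt.
lia.
Qed.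

Lemma ps_one (f : nat -> nat) k : (forall k, f k < f k.+1) -> pow_series f (f k) = 1.
Proof.
move=> hf; rewrite /pow_series.
have hk : k < (f k).+1 by rewrite ltnS; exact: inc_ge.
rewrite (bigD1 (Ordinal hk)) //= eqxx big1 // => i hi.
case E: (f i == f k) => //.
move/eqP/(inc_inj hf): E => E.
by case/negP: hi; apply/eqP/val_inj.
Qed.

Lemma ps_nz (f : nat -> nat) N : pow_series f N != 0 -> exists k, f k = N.
Proof.
rewrite /pow_series => h.
case: (pickP (fun i : 'I_N.+1 => f i == N)) => [i /eqP hi|hn]; first by exists i.
move: h; rewrite big1 // => i _; by have := hn i; rewrite /= => ->.
Qed.

Lemma enum_inf (P : pred nat) : (forall x, exists y, x <= y /\ P y) ->
  exists e : nat -> nat, (forall k, e k < e k.+1) /\ (forall k, P (e k)) /\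
    (forall y, P y -> exists k, e k = y).
Proof.
move=> HP.
have ex x : exists y, P y && (x <= y).
  by case: (HP x) => y [h1 h2]; exists y; rewrite h2 h1.
pose nxt x := ex_minn (ex x).
have nxtP x : P (nxt x) && (x <= nxt x) by rewrite /nxt; case: ex_minnP.
have nxtmin x y : P y -> x <= y -> nxt x <= y.
  by move=> Py xy; rewrite /nxt; case: ex_minnP => m _; apply; rewrite Py xy.
pose e := fix e k := if k is k'.+1 then nxt (e k').+1 else nxt 0.
have einc : forall k, e k < e k.+1.
  move=> k /=; by have /andP[_ h] := nxtP (e k).+1.
exists e; split; [exact: einc|split].
  case=> [|k] /=; [have /andP[h _] := nxtP 0 | have /andP[h _] := nxtP (e k).+1]; exact: h.
move=> y Py.
suff: forall K, y < e K -> exists k, e k = y by apply; exact: (inc_ge einc y.+1).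
elim=> [|K IH] /=.
  by have := nxtmin 0 y Py (leq0n y); rewrite ltnNge => ->.
move=> hy; case: (ltnP y (e K)) => [lt|ge]; first exact: IH.
case: (eqVneq (e K) y) => [<-|ne]; first by exists K.
have : (e K).+1 <= y by rewrite ltn_neqAle ne ge.
move/(nxtmin _ _ Py); rewrite leqNgt hy //.
Qed.

Lemma tt_small : tt 0 = 0 /\ tt 1 = 1 /\ tt 2 = 2.
Proof. by vm_compute. Qed.

Lemma inf c : c < 3 -> forall x, exists y, x <= y /\ tt y == c.
Proof.
move=> hc x; set q := x.+2.
set s := size (A (3*q).+1).
have [_ [_ hev]] := parity q.
have hs : s = 2 * s./2.
  have := odd_double_half s; rewrite (negbTE hev) add0n -muln2; lia.
have hsz := size_A_gt (3*q).+1.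
have hsz0 := size_A_gt (3*q).
have eA : A (3*q).+2 = A (3*q).+1 ++ A (3*q) by rewrite A_S B_S.
have wsh i : i < size (A (3*q)) -> w (s + i) = w i.
  move=> hi; rewrite (wE hi) (wE (m := (3*q).+2)); last by rewrite eA size_cat ltn_add2l.
  by rewrite eA nth_cat ltnNge leq_addr /= addKn.
have htt : tt (s./2 + c) = tt c.
  have e1 : 2 * (s./2 + c) = s + 2*c by lia.
  have e2 : (s + 2*c).+1 = s + (2*c).+1 by lia.
  rewrite /tt e1 e2 !wsh //; move: hsz0; rewrite /q; lia.
exists (s./2 + c); split.
  have h3 : (3*q).+1 < s by [].
  move: h3 hs; rewrite /q; clearbody s; lia.
rewrite htt; have [h0 [h1 h2]] := tt_small.
by clear htt; case: c hc => [|[|[|c]]] //; rewrite ?h0 ?h1 ?h2.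
Qed.

Lemma term n c (e : nat -> nat) N k0 : (forall k, e k < e k.+1) ->
  (forall k, tt (e k) == c) -> (forall y, tt y == c -> exists k, e k = y) ->
  pp n k0 <= N < pp n k0.+1 ->
  ps_mul (C_au (word n c)) (pow_series (fun k => pp n (e k))) N =
  if tt k0 == c then C_au (word n c) (N - pp n k0) else 0.
Proof.
move=> hinc hP hsur hk0.
have ppinc := pp_inc n.
have finc : forall k, pp n (e k) < pp n (e k.+1) by move=> k; exact: inc_lt (hinc k).
have claim : forall i, i <= N -> C_au (word n c) i != 0 ->
    pow_series (fun k => pp n (e k)) (N - i) != 0 -> tt k0 = c /\ i = N - pp n k0.
  move=> i hi hC /ps_nz [k' hk'].
  have hc : tt (e k') = c by apply/eqP.
  have hsz : i < size (blk n (e k')).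
    by move: hC; rewrite /C_au blk_word hc; case: ifP.
  have hb : pp n (e k') <= N < pp n (e k').+1 by rewrite pp_S; lia.
  have ee := bracket_uniq ppinc hb hk0.
  rewrite -ee; split => //; lia.
rewrite /ps_mul; case: eqP => [hc|hc].
  have hi0 : N - pp n k0 < N.+1 by rewrite ltnS leq_subr.
  have hle : pp n k0 <= N by case/andP: hk0.
  rewrite (bigD1 (Ordinal hi0)) //= subKn //.
  have [k' hk'] := hsur _ (introT eqP hc).
  have -> : pow_series (fun k => pp n (e k)) (pp n k0) = 1.
    by have := ps_one k' finc => /=; rewrite hk'.
  rewrite muln1 big1 ?addn0 // => i hi.
  case E1: (C_au (word n c) i) => [|x] //=.
  case E2: (pow_series _ (N - i)) => [|y]; first by rewrite muln0.
  have [_ ei] := claim i (ltn_ord i) ltac:(by rewrite E1) ltac:(by rewrite E2).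
  by case/negP: hi; apply/eqP/val_inj.
rewrite big1 // => i _.
case E1: (C_au (word n c) i) => [|x] //=.
case E2: (pow_series _ (N - i)) => [|y]; first by rewrite muln0.
by have [] := claim i (ltn_ord i) ltac:(by rewrite E1) ltac:(by rewrite E2).
Qed.

Theorem proposition5p6 (n : nat) (hn : 1 <= n) :
  exists j l m : nat -> nat,
    (forall k, j k < j k.+1) /\ (forall k, l k < l k.+1) /\
    (forall k, m k < m k.+1) /\
    (forall k, ~~ odd (j k) /\ ~~ odd (l k) /\ ~~ odd (m k)) /\
    (forall N : nat,
       C_a N =
       ps_add (ps_add (ps_mul (C_au (Rw n)) (pow_series j))
                      (ps_mul (C_au (Sw n)) (pow_series l)))
              (ps_mul (C_au (Tw n)) (pow_series m)) N).
Proof.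
have [eR [iR [pR sR]]] := enum_inf (P := fun k => tt k == 0) (inf (c := 0) isT).
have [eS [iS [pS sS]]] := enum_inf (P := fun k => tt k == 1) (inf (c := 1) isT).
have [eT [iT [pT sT]]] := enum_inf (P := fun k => tt k == 2) (inf (c := 2) isT).
exists (fun k => pp n (eR k)), (fun k => pp n (eS k)), (fun k => pp n (eT k)).
split; first by move=> k /=; exact: (@inc_lt (pp n) (pp_inc n) _ _ (iR k)).
split; first by move=> k /=; exact: (@inc_lt (pp n) (pp_inc n) _ _ (iS k)).
split; first by move=> k /=; exact: (@inc_lt (pp n) (pp_inc n) _ _ (iT k)).
split; first by move=> k; rewrite !pp_even.
move=> N.
have [k0 hk0] := bracket (pp0 n) (pp_inc n) N.
rewrite /ps_add.
rewrite (term (c := 0) iR pR sR hk0) (term (c := 1) iS pS sS hk0) (term (c := 2) iT pT sT hk0).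
have hle : pp n k0 <= N by case/andP: hk0.
have hlt : N - pp n k0 < size (blk n k0).
  have := pp_S n k0; move: hk0; lia.
have key : C_au (word n (tt k0)) (N - pp n k0) = C_a N.
  rewrite /C_a -blk_word /C_au hlt -keyw // subnKC //.
rewrite -key; have := tt_lt3 k0.
by case: (tt k0) => [|[|[|c]]] //= _; rewrite ?addn0.
Qed.
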